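(* Let $U$ be an open subset of $\mathbb{H}\cong\mathbb{C}^2$. The set $\mathcal{H}_{\mathbb{R}}$ of almost everywhere defined hyperholomorphic functions $f=f_1+f_2\mathbf{j}$ on $U$ whose components $f_1,f_2$ are real valued is a right algebra over $\mathbb{R}$ (with respect to pointwise addition and pointwise quaternionic multiplication).
   Context: Quaternions are written $q=z_1+z_2\mathbf{j}$ with $z_1,z_2\in\mathbb{C}$, where $\mathbf{j}^2=-1$ and $z\mathbf{j}=\mathbf{j}\overline z$ for $z\in\mathbb{C}$. A smooth function $f:U\to\mathbb{H}$ is written $f=f_1+f_2\mathbf{j}$ with $f_1,f_2$ complex valued (its components). The product of $f=f_1+f_2\mathbf{j}$ and $g=g_1+g_2\mathbf{j}$ is $f*g=f_1g_1-f_2\overline g_2+(f_1g_2+f_2\overline g_1)\mathbf{j}$. The modified Cauchy–Fueter operator is $\mathcal{D}f=\frac12\big(\frac{\partial f_1}{\partial\overline z_1}-\frac{\partial\overline f_2}{\partial z_2}\big)+\mathbf{j}\,\frac12\big(\frac{\partial f_1}{\partial\overline z_2}+\frac{\partial\overline f_2}{\partial z_1}\big)$, and $f$ is hyperholomorphic if $\mathcal{D}f=0$ where defined. An almost everywhere defined hyperholomorphic function is one defined and smooth on an open subset of $U$ of full measure, where it satisfies $\mathcal{D}f=0$. *)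

(* Defs.v *)
From Stdlib Require Import Reals List.
From Coquelicot Require Import Coquelicot.
Open Scope R_scope.

(* A point q = z1 + z2 j of H = C^2 is represented by the pair (z1, z2). *)
Definition pt : Type := (C * C)%type.

(* real coordinates of a point: 0 -> x1, 1 -> y1, 2 -> x2, 3 -> y2,
   where z1 = x1 + i y1 and z2 = x2 + i y2 *)
Definition coord (p : pt) (k : nat) : R :=
  match k with
  | 0%nat => Re (fst p)
  | 1%nat => Im (fst p)
  | 2%nat => Re (snd p)
  | _ => Im (snd p)
  end.

Definition shift (p : pt) (k : nat) (t : R) : pt :=
  match k with
  | 0%nat => ((Re (fst p) + t, Im (fst p)), snd p)
  | 1%nat => ((Re (fst p), Im (fst p) + t), snd p)
  | 2%nat => (fst p, (Re (snd p) + t, Im (snd p)))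
  | _ => (fst p, (Re (snd p), Im (snd p) + t))
  end.

Definition dpart (k : nat) (g : pt -> C) (p : pt) : C :=
  (Derive (fun t => Re (g (shift p k t))) 0,
   Derive (fun t => Im (g (shift p k t))) 0).

Definition ex_dpart (k : nat) (g : pt -> C) (p : pt) : Prop :=
  ex_derive (fun t => Re (g (shift p k t))) 0 /\
  ex_derive (fun t => Im (g (shift p k t))) 0.

Definition iter_dpart (l : list nat) (g : pt -> C) : pt -> C :=
  fold_right (fun k h => dpart k h) g l.

Definition is_dir (k : nat) : Prop := (k < 4)%nat.

Definition smooth_on (V : pt -> Prop) (g : pt -> C) : Prop :=
  forall (l : list nat), List.Forall is_dir l ->
    forall p, V p ->
      continuous (iter_dpart l g) p /\
      (forall k, is_dir k -> ex_dpart k (iter_dpart l g) p).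

Definition dzbar1 (g : pt -> C) (p : pt) : C :=
  Cmult (RtoC (1/2)) (Cplus (dpart 0 g p) (Cmult Ci (dpart 1 g p))).
Definition dz1 (g : pt -> C) (p : pt) : C :=
  Cmult (RtoC (1/2)) (Cminus (dpart 0 g p) (Cmult Ci (dpart 1 g p))).
Definition dzbar2 (g : pt -> C) (p : pt) : C :=
  Cmult (RtoC (1/2)) (Cplus (dpart 2 g p) (Cmult Ci (dpart 3 g p))).
Definition dz2 (g : pt -> C) (p : pt) : C :=
  Cmult (RtoC (1/2)) (Cminus (dpart 2 g p) (Cmult Ci (dpart 3 g p))).

(* The modified Cauchy-Fueter operator applied to f = f1 + f2 j,
   returned as the pair of its components (D f = a + b j  <->  (a, b)). *)
Definition CF_op (f1 f2 : pt -> C) (p : pt) : C * C :=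
  (Cmult (RtoC (1/2)) (Cminus (dzbar1 f1 p) (dz2 (fun q => Cconj (f2 q)) p)),
   Cmult (RtoC (1/2)) (Cplus (dzbar2 f1 p) (dz1 (fun q => Cconj (f2 q)) p))).

(* Lebesgue null subsets of H = R^4: coverable by countably many closed boxes
   of arbitrarily small total volume. *)
Definition box_vol (a b : nat -> R) : R :=
  (b 0%nat - a 0%nat) * (b 1%nat - a 1%nat) * (b 2%nat - a 2%nat) * (b 3%nat - a 3%nat).

Definition null_set (S : pt -> Prop) : Prop :=
  forall eps : R, 0 < eps ->
    exists a b : nat -> nat -> R,
      (forall n k, a n k <= b n k) /\
      (forall p, S p -> exists n, forall k, (k < 4)%nat ->
                   a n k <= coord p k <= b n k) /\
      (forall N, sum_f_R0 (fun n => box_vol (a n) (b n)) N <= eps).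

(* f = f1 + f2 j, defined (at least) on V, is an almost everywhere defined
   hyperholomorphic function on U: V is an open subset of U of full measure,
   f is smooth on V and D f = 0 on V. *)
Definition ae_hyperholo (U V : pt -> Prop) (f1 f2 : pt -> C) : Prop :=
  open V /\ (forall p, V p -> U p) /\
  null_set (fun p => U p /\ ~ V p) /\
  smooth_on V f1 /\ smooth_on V f2 /\
  (forall p, V p -> CF_op f1 f2 p = (RtoC 0, RtoC 0)).

Definition in_HR (U V : pt -> Prop) (f1 f2 : pt -> C) : Prop :=
  ae_hyperholo U V f1 f2 /\
  (forall p, V p -> Im (f1 p) = 0 /\ Im (f2 p) = 0).

Definition qadd1 (f1 f2 g1 g2 : pt -> C) : pt -> C := fun p => Cplus (f1 p) (g1 p).
Definition qadd2 (f1 f2 g1 g2 : pt -> C) : pt -> C := fun p => Cplus (f2 p) (g2 p).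
(* f * g = f1 g1 - f2 conj(g2) + (f1 g2 + f2 conj(g1)) j *)
Definition qmul1 (f1 f2 g1 g2 : pt -> C) : pt -> C :=
  fun p => Cminus (Cmult (f1 p) (g1 p)) (Cmult (f2 p) (Cconj (g2 p))).
Definition qmul2 (f1 f2 g1 g2 : pt -> C) : pt -> C :=
  fun p => Cplus (Cmult (f1 p) (g2 p)) (Cmult (f2 p) (Cconj (g1 p))).

(* Main.v *)
Require Import Defs.
From Stdlib Require Import Reals List Lra Lia Arith FunctionalExtensionality Classical.
From Coquelicot Require Import Coquelicot.
Open Scope R_scope.

Definition dR (k:nat) (u:pt -> R) (p:pt) : R := Derive (fun t => u (shift p k t)) 0.
Definition exR (k:nat) (u:pt->R) (p:pt) : Prop := ex_derive (fun t => u (shift p k t)) 0.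
Fixpoint iterR (l:list nat) (u:pt->R) : pt -> R :=
  match l with nil => u | k::l' => dR k (iterR l' u) end.

Lemma shift0 p k : shift p k 0 = p.
Proof. destruct p as [[a b][c d]]; destruct k as [|[|[|k]]]; simpl; now rewrite Rplus_0_r. Qed.

Lemma shift_ball (p : pt) k (e : posreal) t : Rabs t < e -> ball p e (shift p k t).
Proof.
intros Ht. destruct p as [[a b] [c d]].
destruct k as [|[|[|k]]]; simpl; split; simpl; split; simpl; try apply ball_center;
unfold ball; simpl; unfold AbsRing_ball, abs, minus, plus, opp; simpl;
match goal with |- Rabs (?x + t + - ?x) < _ => replace (x + t + - x) with t by ring end; exact Ht.
Qed.

Lemma shift_loc (V : pt -> Prop) p k : open V -> V p -> locally 0 (fun t => V (shift p k t)).
Proof.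
intros HV Hp. destruct (HV p Hp) as [e He]. exists e. intros t Ht. apply He. apply shift_ball.
unfold ball in Ht; simpl in Ht; unfold AbsRing_ball, abs, minus, plus, opp in Ht; simpl in Ht.
rewrite Ropp_0, Rplus_0_r in Ht. exact Ht.
Qed.

Lemma dR_ext V u v k p : open V -> (forall q, V q -> u q = v q) -> V p -> dR k u p = dR k v p.
Proof.
intros HV H Hp. unfold dR. apply Derive_ext_loc.
apply filter_imp with (fun t => V (shift p k t)); [intros; apply H; auto | apply shift_loc; auto].
Qed.

Lemma exR_ext V u v k p : open V -> (forall q, V q -> u q = v q) -> V p -> exR k u p -> exR k v p.
Proof.
intros HV H Hp. unfold exR. apply ex_derive_ext_loc.
apply filter_imp with (fun t => V (shift p k t)); [intros; apply H; auto | apply shift_loc; auto].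
Qed.

Lemma dR_plus u v k p : exR k u p -> exR k v p -> dR k (fun q => u q + v q) p = dR k u p + dR k v p.
Proof. intros. unfold dR. apply (Derive_plus (fun t => u (shift p k t)) (fun t => v (shift p k t))); auto. Qed.
Lemma exR_plus u v k p : exR k u p -> exR k v p -> exR k (fun q => u q + v q) p.
Proof. intros. unfold exR. apply (ex_derive_plus (fun t => u (shift p k t)) (fun t => v (shift p k t))); auto. Qed.
Lemma dR_mult u v k p : exR k u p -> exR k v p -> dR k (fun q => u q * v q) p = dR k u p * v p + u p * dR k v p.
Proof. intros. unfold dR. rewrite (Derive_mult (fun t => u (shift p k t)) (fun t => v (shift p k t))); auto.
rewrite shift0. reflexivity. Qed.
Lemma exR_mult u v k p : exR k u p -> exR k v p -> exR k (fun q => u q * v q) p.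
Proof. intros. unfold exR. apply (ex_derive_mult (fun t => u (shift p k t)) (fun t => v (shift p k t))); auto. Qed.
Lemma dR_const c k p : dR k (fun _ => c) p = 0.
Proof. unfold dR. apply Derive_const. Qed.
Lemma exR_const c k p : exR k (fun _ => c) p.
Proof. unfold exR. apply ex_derive_const. Qed.
Lemma dR_opp u k p : dR k (fun q => - u q) p = - dR k u p.
Proof. unfold dR. apply (Derive_opp (fun t => u (shift p k t))). Qed.
Lemma dR_minus u v k p : exR k u p -> exR k v p -> dR k (fun q => u q - v q) p = dR k u p - dR k v p.
Proof. intros. unfold Rminus. rewrite dR_plus. rewrite dR_opp. reflexivity. auto.
unfold exR. apply (ex_derive_opp (fun t => v (shift p k t))); auto. Qed.

Lemma iterR_app l k u : iterR (l ++ k :: nil) u = iterR l (dR k u).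
Proof. induction l; simpl; auto. rewrite IHl; auto. Qed.

Definition Sm (V : pt -> Prop) (n:nat) (u:pt->R) : Prop :=
  forall l, (length l <= n)%nat -> List.Forall is_dir l -> forall p, V p ->
    continuous (iterR l u) p /\ forall k, is_dir k -> exR k (iterR l u) p.

Lemma Sm_S V n u : Sm V (S n) u <-> Sm V 0 u /\ forall k, is_dir k -> Sm V n (dR k u).
Proof.
split.
- intros H. split.
  + intros l Hl. apply H. lia.
  + intros k Hk l Hl Hd p Hp. rewrite <- iterR_app. apply H; auto.
    rewrite length_app; simpl; lia. apply Forall_app; split; auto.
- intros [H0 H1] l Hl Hd p Hp. destruct l as [|k l'] using rev_ind.
  + apply H0; auto.
  + rewrite iterR_app. apply Forall_app in Hd. destruct Hd as [Hd1 Hd2]. inversion Hd2; subst.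
    apply H1; auto. rewrite length_app in Hl; simpl in Hl; lia.
Qed.

Lemma Sm_mono V n u : Sm V (S n) u -> Sm V n u.
Proof. intros H l Hl. apply H. lia. Qed.

Lemma Sm_pt V n u p : Sm V n u -> V p -> continuous u p /\ forall k, is_dir k -> exR k u p.
Proof. intros H Hp. apply (H nil); simpl; auto. lia. Qed.

Lemma Sm0_intro V u : (forall p, V p -> continuous u p /\ forall k, is_dir k -> exR k u p) -> Sm V 0 u.
Proof. intros H l Hl Hd p Hp. destruct l; [apply H; auto | simpl in Hl; lia]. Qed.

Lemma Sm_sub V V' n u : (forall p, V' p -> V p) -> Sm V n u -> Sm V' n u.
Proof. intros H1 H l Hl Hd p Hp. apply H; auto. Qed.

Lemma Sm_ext V n u v : open V -> (forall q, V q -> u q = v q) -> Sm V n u -> Sm V n v.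
Proof.
intros HV. revert u v. induction n; intros u v Huv H.
- apply Sm0_intro. intros p Hp. destruct (Sm_pt _ _ _ p H Hp) as [Hc He]. split.
  + apply continuous_ext_loc with u; auto. apply filter_imp with V; auto.
  + intros k Hk. apply exR_ext with V u; auto.
- apply Sm_S in H. destruct H as [H0 H1]. apply Sm_S. split.
  + apply Sm0_intro. intros p Hp. destruct (Sm_pt _ _ _ p H0 Hp) as [Hc He]. split.
    * apply continuous_ext_loc with u; auto. apply filter_imp with V; auto.
    * intros k Hk. apply exR_ext with V u; auto.
  + intros k Hk. apply IHn with (dR k u); auto. intros q Hq. apply dR_ext with V; auto.
Qed.

Lemma Sm_plus V n u v : open V -> Sm V n u -> Sm V n v -> Sm V n (fun q => u q + v q).
Proof.
intros HV. revert u v. induction n; intros u v Hu Hv.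
- apply Sm0_intro. intros p Hp. destruct (Sm_pt _ _ _ p Hu Hp) as [Hc He].
  destruct (Sm_pt _ _ _ p Hv Hp) as [Hc' He']. split.
  + apply (continuous_plus u v); auto.
  + intros k Hk. apply exR_plus; auto.
- apply Sm_S in Hu. apply Sm_S in Hv. destruct Hu as [Hu0 Hu1], Hv as [Hv0 Hv1]. apply Sm_S. split.
  + apply Sm0_intro. intros p Hp. destruct (Sm_pt _ _ _ p Hu0 Hp) as [Hc He].
    destruct (Sm_pt _ _ _ p Hv0 Hp) as [Hc' He']. split.
    * apply (continuous_plus u v); auto.
    * intros k Hk. apply exR_plus; auto.
  + intros k Hk. apply Sm_ext with (fun q => dR k u q + dR k v q); auto.
    intros q Hq. symmetry. apply dR_plus. apply (Sm_pt _ _ _ q Hu0 Hq); auto. apply (Sm_pt _ _ _ q Hv0 Hq); auto.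
Qed.

Lemma Sm_mult V n u v : open V -> Sm V n u -> Sm V n v -> Sm V n (fun q => u q * v q).
Proof.
intros HV. revert u v. induction n; intros u v Hu Hv.
- apply Sm0_intro. intros p Hp. destruct (Sm_pt _ _ _ p Hu Hp) as [Hc He].
  destruct (Sm_pt _ _ _ p Hv Hp) as [Hc' He']. split.
  + apply (continuous_mult u v); auto.
  + intros k Hk. apply exR_mult; auto.
- pose proof (Sm_mono _ _ _ Hu) as Hum. pose proof (Sm_mono _ _ _ Hv) as Hvm.
  apply Sm_S in Hu. apply Sm_S in Hv. destruct Hu as [Hu0 Hu1], Hv as [Hv0 Hv1]. apply Sm_S. split.
  + apply Sm0_intro. intros p Hp. destruct (Sm_pt _ _ _ p Hu0 Hp) as [Hc He].
    destruct (Sm_pt _ _ _ p Hv0 Hp) as [Hc' He']. split.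
    * apply (continuous_mult u v); auto.
    * intros k Hk. apply exR_mult; auto.
  + intros k Hk. apply Sm_ext with (fun q => dR k u q * v q + u q * dR k v q); auto.
    * intros q Hq. symmetry. apply dR_mult. apply (Sm_pt _ _ _ q Hu0 Hq); auto. apply (Sm_pt _ _ _ q Hv0 Hq); auto.
    * apply Sm_plus; auto.
Qed.

Lemma Sm_const V n c : open V -> Sm V n (fun _ => c).
Proof.
intros HV. revert c. induction n; intros c.
- apply Sm0_intro. intros p Hp. split. apply continuous_const. intros; apply exR_const.
- apply Sm_S. split.
  + apply Sm0_intro. intros p Hp. split. apply continuous_const. intros; apply exR_const.
  + intros k Hk. apply Sm_ext with (fun _ => 0); auto. intros; symmetry; apply dR_const.
Qed.

Lemma Sm_opp V n u : open V -> Sm V n u -> Sm V n (fun q => - u q).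
Proof. intros HV H. apply Sm_ext with (fun q => (-1) * u q). exact HV. intros; ring.
apply Sm_mult; auto. apply Sm_const; auto. Qed.

Lemma Sm_minus V n u v : open V -> Sm V n u -> Sm V n v -> Sm V n (fun q => u q - v q).
Proof. intros HV H1 H2. apply Sm_ext with (fun q => u q + - v q). exact HV. intros; ring.
apply Sm_plus; auto. apply Sm_opp; auto. Qed.

Lemma iter_dpart_eq l g : iter_dpart l g =
  fun p => (iterR l (fun q => fst (g q)) p, iterR l (fun q => snd (g q)) p).
Proof.
induction l; simpl.
- extensionality p. destruct (g p); reflexivity.
- rewrite IHl. extensionality p. reflexivity.
Qed.

Definition SmA V u := forall n, Sm V n u.

Lemma smooth_of_real V g : SmA V (fun q => fst (g q)) -> SmA V (fun q => snd (g q)) -> smooth_on V g.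
Proof.
intros H1 H2 l Hl p Hp. rewrite iter_dpart_eq.
destruct (H1 (length l) l (le_n _) Hl p Hp) as [Hc1 He1].
destruct (H2 (length l) l (le_n _) Hl p Hp) as [Hc2 He2]. split.
- apply (continuous_comp_2 (U:=prod_UniformSpace C_UniformSpace C_UniformSpace) (X:=C_UniformSpace) _ _ pair p Hc1 Hc2).
  apply continuous_ext_loc with (fun x => x). apply filter_forall. intros [x y]; reflexivity.
  apply continuous_id.
- intros k Hk. split. apply He1; auto. apply He2; auto.
Qed.

Lemma real_of_smooth V g : smooth_on V g -> SmA V (fun q => fst (g q)) /\ SmA V (fun q => snd (g q)).
Proof.
intros H. split; intros n l Hl Hd p Hp; destruct (H l Hd p Hp) as [Hc He]; rewrite iter_dpart_eq in Hc, He; split.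
- apply (continuous_comp _ fst p Hc (continuous_fst _ _)).
- intros k Hk. apply (He k Hk).
- apply (continuous_comp _ snd p Hc (continuous_snd _ _)).
- intros k Hk. apply (He k Hk).
Qed.

Lemma dpart_eq k g p : dpart k g p = (dR k (fun q => fst (g q)) p, dR k (fun q => snd (g q)) p).
Proof. reflexivity. Qed.
Lemma dR_conj k g p : dR k (fun q => snd (Cconj (g q))) p = - dR k (fun q => snd (g q)) p.
Proof. apply (dR_opp (fun q => snd (g q))). Qed.
Lemma dR_conj1 k g p : dR k (fun q => fst (Cconj (g q))) p = dR k (fun q => fst (g q)) p.
Proof. reflexivity. Qed.

Lemma CF_formula f1 f2 p : CF_op f1 f2 p =
  (((dR 0 (fun q => fst (f1 q)) p - dR 1 (fun q => snd (f1 q)) p - dR 2 (fun q => fst (f2 q)) p + dR 3 (fun q => snd (f2 q)) p)/4,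
    (dR 0 (fun q => snd (f1 q)) p + dR 1 (fun q => fst (f1 q)) p + dR 2 (fun q => snd (f2 q)) p + dR 3 (fun q => fst (f2 q)) p)/4),
   ((dR 2 (fun q => fst (f1 q)) p - dR 3 (fun q => snd (f1 q)) p + dR 0 (fun q => fst (f2 q)) p - dR 1 (fun q => snd (f2 q)) p)/4,
    (dR 2 (fun q => snd (f1 q)) p + dR 3 (fun q => fst (f1 q)) p - dR 0 (fun q => snd (f2 q)) p - dR 1 (fun q => fst (f2 q)) p)/4)).
Proof.
unfold CF_op, dzbar1, dz2, dzbar2, dz1. rewrite !dpart_eq, !dR_conj, !dR_conj1.
unfold Cminus, Cplus, Copp, Cmult, RtoC, Ci; simpl. f_equal; f_equal; field.
Qed.

Lemma dR_zero V u k p : open V -> (forall q, V q -> u q = 0) -> V p -> dR k u p = 0.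
Proof. intros HV H Hp. rewrite (dR_ext V u (fun _ => 0)); auto. apply dR_const. Qed.

Lemma CF_hyp V f1 f2 p : open V -> V p -> (forall q, V q -> snd (f1 q) = 0 /\ snd (f2 q) = 0) ->
  CF_op f1 f2 p = (RtoC 0, RtoC 0) ->
  dR 0 (fun q => fst (f1 q)) p = dR 2 (fun q => fst (f2 q)) p /\
  dR 1 (fun q => fst (f1 q)) p = - dR 3 (fun q => fst (f2 q)) p /\
  dR 2 (fun q => fst (f1 q)) p = - dR 0 (fun q => fst (f2 q)) p /\
  dR 3 (fun q => fst (f1 q)) p = dR 1 (fun q => fst (f2 q)) p.
Proof.
intros HV Hp Hz H. rewrite CF_formula in H.
assert (Z1 : forall k, dR k (fun q => snd (f1 q)) p = 0).
{ intros k; apply dR_zero with V; auto. intros q Hq; apply Hz; auto. }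
assert (Z2 : forall k, dR k (fun q => snd (f2 q)) p = 0).
{ intros k; apply dR_zero with V; auto. intros q Hq; apply Hz; auto. }
rewrite !Z1, !Z2 in H. unfold RtoC in H. injection H. intros. lra.
Qed.

Lemma CF_concl V f1 f2 p : open V -> V p -> (forall q, V q -> snd (f1 q) = 0 /\ snd (f2 q) = 0) ->
  dR 0 (fun q => fst (f1 q)) p = dR 2 (fun q => fst (f2 q)) p ->
  dR 1 (fun q => fst (f1 q)) p = - dR 3 (fun q => fst (f2 q)) p ->
  dR 2 (fun q => fst (f1 q)) p = - dR 0 (fun q => fst (f2 q)) p ->
  dR 3 (fun q => fst (f1 q)) p = dR 1 (fun q => fst (f2 q)) p ->
  CF_op f1 f2 p = (RtoC 0, RtoC 0).
Proof.
intros HV Hp Hz E0 E1 E2 E3. rewrite CF_formula.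
assert (Z1 : forall k, dR k (fun q => snd (f1 q)) p = 0).
{ intros k; apply dR_zero with V; auto. intros q Hq; apply Hz; auto. }
assert (Z2 : forall k, dR k (fun q => snd (f2 q)) p = 0).
{ intros k; apply dR_zero with V; auto. intros q Hq; apply Hz; auto. }
rewrite !Z1, !Z2, E0, E1, E2, E3. unfold RtoC. f_equal; f_equal; field.
Qed.

Definition inter {X} (c1 c2 : nat -> X) (n : nat) : X :=
  if Nat.even n then c1 (Nat.div2 n) else c2 (Nat.div2 n).

Lemma inter_even {X} (c1 c2 : nat -> X) n : inter c1 c2 (2*n) = c1 n.
Proof. unfold inter. rewrite Nat.even_even, Nat.div2_double. reflexivity. Qed.
Lemma inter_odd {X} (c1 c2 : nat -> X) n : inter c1 c2 (2*n+1) = c2 n.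
Proof. unfold inter. rewrite Nat.even_odd, Nat.div2_odd'. reflexivity. Qed.

Lemma sum_inter c1 c2 M : sum_f_R0 (inter c1 c2) (2*M+1) = sum_f_R0 c1 M + sum_f_R0 c2 M.
Proof.
induction M.
- simpl. unfold inter; simpl. ring.
- replace (2 * S M + 1)%nat with (S (S (2*M+1))) by lia.
  rewrite (tech5 (inter c1 c2) (S (2*M+1))), (tech5 (inter c1 c2) (2*M+1)), IHM.
  rewrite (tech5 c1 M), (tech5 c2 M).
  replace (S (2*M+1)) with (2 * S M)%nat by lia.
  replace (S (2 * S M)) with (2 * S M + 1)%nat by lia.
  rewrite inter_even, inter_odd. ring.
Qed.

Lemma sum_mono c N M : (forall n, 0 <= c n) -> (N <= M)%nat -> sum_f_R0 c N <= sum_f_R0 c M.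
Proof.
intros Hc H. induction H. lra. rewrite tech5. specialize (Hc (S m)). lra.
Qed.

Lemma box_vol_pos a b : (forall k, a k <= b k) -> 0 <= box_vol a b.
Proof.
intros H. unfold box_vol.
pose proof (H 0%nat); pose proof (H 1%nat); pose proof (H 2%nat); pose proof (H 3%nat).
repeat apply Rmult_le_pos; lra.
Qed.

Lemma null_sub (S T : pt -> Prop) : (forall p, T p -> S p) -> null_set S -> null_set T.
Proof.
intros HTS H eps He. destruct (H eps He) as [a [b [H1 [H2 H3]]]].
exists a, b. split; auto.
Qed.

Lemma null_union (S1 S2 : pt -> Prop) : null_set S1 -> null_set S2 -> null_set (fun p => S1 p \/ S2 p).
Proof.
intros N1 N2 eps He.
destruct (N1 (eps/2)) as [a1 [b1 [Ha1 [Hc1 Hs1]]]]; [lra|].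
destruct (N2 (eps/2)) as [a2 [b2 [Ha2 [Hc2 Hs2]]]]; [lra|].
exists (inter a1 a2), (inter b1 b2). split; [|split].
- intros n k. unfold inter. destruct (Nat.even n); auto.
- intros p [Hp|Hp].
  + destruct (Hc1 p Hp) as [n Hn]. exists (2*n)%nat. rewrite !inter_even. auto.
  + destruct (Hc2 p Hp) as [n Hn]. exists (2*n+1)%nat. rewrite !inter_odd. auto.
- intros N.
  assert (E : forall n, box_vol (inter a1 a2 n) (inter b1 b2 n) =
     inter (fun m => box_vol (a1 m) (b1 m)) (fun m => box_vol (a2 m) (b2 m)) n).
  { intros n; unfold inter; destruct (Nat.even n); reflexivity. }
  apply Rle_trans with (sum_f_R0 (fun n => box_vol (inter a1 a2 n) (inter b1 b2 n)) (2*N+1)).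
  + apply sum_mono; [|lia]. intros n. rewrite E. unfold inter. destruct (Nat.even n); apply box_vol_pos; auto.
  + rewrite (sum_eq _ _ _ (fun n _ => E n)). rewrite sum_inter. specialize (Hs1 N); specialize (Hs2 N). lra.
Qed.

Lemma null_empty (S : pt -> Prop) : (forall p, ~ S p) -> null_set S.
Proof.
intros HS eps He. exists (fun _ _ => 0), (fun _ _ => 0). split; [intros; lra|split].
- intros p Hp. exfalso. apply (HS p Hp).
- intros N. assert (sum_f_R0 (fun n => box_vol (fun _ => 0) (fun _ => 0)) N = 0).
  { induction N; simpl; unfold box_vol in *; [ring| rewrite IHN; ring]. }
  rewrite H. lra.
Qed.

Definition Eqs (f1 f2 : pt -> C) p :=
  dR 0 (fun q => fst (f1 q)) p = dR 2 (fun q => fst (f2 q)) p /\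
  dR 1 (fun q => fst (f1 q)) p = - dR 3 (fun q => fst (f2 q)) p /\
  dR 2 (fun q => fst (f1 q)) p = - dR 0 (fun q => fst (f2 q)) p /\
  dR 3 (fun q => fst (f1 q)) p = dR 1 (fun q => fst (f2 q)) p.

Lemma HR_parts U V f1 f2 : in_HR U V f1 f2 ->
  open V /\ (forall p, V p -> U p) /\ null_set (fun p => U p /\ ~ V p) /\
  SmA V (fun q => fst (f1 q)) /\ SmA V (fun q => snd (f1 q)) /\
  SmA V (fun q => fst (f2 q)) /\ SmA V (fun q => snd (f2 q)) /\
  (forall p, V p -> Eqs f1 f2 p) /\ (forall q, V q -> snd (f1 q) = 0 /\ snd (f2 q) = 0).
Proof.
intros [[HV [HVU [HN [S1 [S2 HCF]]]]] HI].
destruct (real_of_smooth _ _ S1) as [A1 B1]. destruct (real_of_smooth _ _ S2) as [A2 B2].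
refine (conj HV (conj HVU (conj HN (conj A1 (conj B1 (conj A2 (conj B2 (conj _ HI)))))))).
intros p Hp. apply (CF_hyp V); auto.
Qed.

Lemma HR_make U V h1 h2 : open V -> (forall p, V p -> U p) -> null_set (fun p => U p /\ ~ V p) ->
  SmA V (fun q => fst (h1 q)) -> SmA V (fun q => snd (h1 q)) ->
  SmA V (fun q => fst (h2 q)) -> SmA V (fun q => snd (h2 q)) ->
  (forall q, V q -> snd (h1 q) = 0 /\ snd (h2 q) = 0) ->
  (forall p, V p -> Eqs h1 h2 p) -> in_HR U V h1 h2.
Proof.
intros HV HVU HN A1 B1 A2 B2 HZ HE. split; [|exact HZ].
refine (conj HV (conj HVU (conj HN (conj _ (conj _ _))))).
apply smooth_of_real; auto. apply smooth_of_real; auto.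
intros p Hp. destruct (HE p Hp) as [E0 [E1 [E2 E3]]]. apply (CF_concl V); auto.
Qed.

Lemma exA V u k p : SmA V u -> V p -> is_dir k -> exR k u p.
Proof. intros H Hp Hk. apply (Sm_pt V 0 u p (H 0%nat) Hp); auto. Qed.

Lemma SmA_sub V V' u : (forall p, V' p -> V p) -> SmA V u -> SmA V' u.
Proof. intros H1 H n. apply Sm_sub with V; auto. Qed.

Ltac smt := lazymatch goal with
  | |- Sm _ _ (fun q => @?a q - @?b q) => apply Sm_minus; [assumption|smt|smt]
  | |- Sm _ _ (fun q => @?a q + @?b q) => apply Sm_plus; [assumption|smt|smt]
  | |- Sm _ _ (fun q => @?a q * @?b q) => apply Sm_mult; [assumption|smt|smt]
  | |- Sm _ _ (fun q => - @?a q) => apply Sm_opp; [assumption|smt]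
  | |- Sm ?V _ ?u => first [ match goal with H : SmA ?V ?u |- _ => exact (H _) end
                           | apply Sm_const; assumption ]
  end.

Lemma dR_scal u r k p : exR k u p -> dR k (fun q => u q * r) p = dR k u p * r.
Proof. intros H. rewrite (dR_mult u (fun _ => r)); [rewrite dR_const; ring | exact H | apply exR_const]. Qed.
Lemma dR_scal0 u k p : dR k (fun q => u q * 0) p = 0.
Proof. unfold dR. rewrite (Derive_ext _ (fun _ => 0)); [apply Derive_const | intros; ring]. Qed.
Lemma dR_pm u1 v1 u2 v2 k p : exR k u1 p -> exR k v1 p -> exR k u2 p -> exR k v2 p ->
  dR k (fun q => u1 q * v1 q - u2 q * v2 q) p =
  (dR k u1 p * v1 p + u1 p * dR k v1 p) - (dR k u2 p * v2 p + u2 p * dR k v2 p).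
Proof. intros. rewrite (dR_minus (fun q => u1 q * v1 q) (fun q => u2 q * v2 q)) by (apply exR_mult; auto).
rewrite (dR_mult u1 v1), (dR_mult u2 v2); auto. Qed.
Lemma dR_pp u1 v1 u2 v2 k p : exR k u1 p -> exR k v1 p -> exR k u2 p -> exR k v2 p ->
  dR k (fun q => u1 q * v1 q + u2 q * v2 q) p =
  (dR k u1 p * v1 p + u1 p * dR k v1 p) + (dR k u2 p * v2 p + u2 p * dR k v2 p).
Proof. intros. rewrite (dR_plus (fun q => u1 q * v1 q) (fun q => u2 q * v2 q)) by (apply exR_mult; auto).
rewrite (dR_mult u1 v1), (dR_mult u2 v2); auto. Qed.

Lemma dirs : is_dir 0 /\ is_dir 1 /\ is_dir 2 /\ is_dir 3.
Proof. unfold is_dir; repeat split; lia. Qed.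

Theorem corollary2p3 (U : pt -> Prop) (HU : open U) :
  in_HR U U (fun _ => RtoC 0) (fun _ => RtoC 0) /\
  (forall (V W : pt -> Prop) (f1 f2 g1 g2 : pt -> C),
      in_HR U V f1 f2 -> in_HR U W g1 g2 ->
      in_HR U (fun p => V p /\ W p) (qadd1 f1 f2 g1 g2) (qadd2 f1 f2 g1 g2)) /\
  (forall (V : pt -> Prop) (f1 f2 : pt -> C) (r : R),
      in_HR U V f1 f2 ->
      in_HR U V (fun p => Cmult (f1 p) (RtoC r)) (fun p => Cmult (f2 p) (RtoC r))) /\
  (forall (V W : pt -> Prop) (f1 f2 g1 g2 : pt -> C),
      in_HR U V f1 f2 -> in_HR U W g1 g2 ->
      in_HR U (fun p => V p /\ W p) (qmul1 f1 f2 g1 g2) (qmul2 f1 f2 g1 g2)).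
Proof.
destruct dirs as [D0 [D1 [D2 D3]]].
split; [|split; [|split]].
- apply HR_make; auto.
  + apply null_empty. intros p [H1 H2]; auto.
  + intros n; apply Sm_const; auto.
  + intros n; apply Sm_const; auto.
  + intros n; apply Sm_const; auto.
  + intros n; apply Sm_const; auto.
  + intros p Hp. unfold Eqs. rewrite !dR_const. repeat split; ring.
- intros V W f1 f2 g1 g2 HF HG.
  destruct (HR_parts _ _ _ _ HF) as [HV [HVU [HNV [A1 [B1 [A2 [B2 [EF ZF]]]]]]]].
  destruct (HR_parts _ _ _ _ HG) as [HW [HWU [HNW [C1 [E1 [C2 [E2 [EG ZG]]]]]]]].
  set (X := fun p => V p /\ W p).
  assert (HX : open X) by (apply open_and; auto).
  assert (XV : forall p, X p -> V p) by (intros p [? ?]; auto).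
  assert (XW : forall p, X p -> W p) by (intros p [? ?]; auto).
  apply (SmA_sub V X) in A1, B1, A2, B2; auto. apply (SmA_sub W X) in C1, E1, C2, E2; auto.
  apply HR_make; auto.
  + apply null_sub with (fun p => (U p /\ ~ V p) \/ (U p /\ ~ W p)).
    * intros p [Hp Hn]. destruct (Classical_Prop.classic (V p)) as [Hv|Hv]; [right|left]; split; auto.
      intro Hw; apply Hn; split; auto.
    * apply null_union; auto.
  + intros n; unfold qadd1, Cplus; simpl; smt.
  + intros n; unfold qadd1, Cplus; simpl; smt.
  + intros n; unfold qadd2, Cplus; simpl; smt.
  + intros n; unfold qadd2, Cplus; simpl; smt.
  + intros q Hq. destruct (ZF q (XV q Hq)), (ZG q (XW q Hq)). unfold qadd1, qadd2, Cplus; simpl. split; lra.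
  + intros p Hp.
    assert (P1 : forall k, is_dir k -> dR k (fun q => fst (qadd1 f1 f2 g1 g2 q)) p =
       dR k (fun q => fst (f1 q)) p + dR k (fun q => fst (g1 q)) p).
    { intros k Hk. apply (dR_plus (fun q => fst (f1 q)) (fun q => fst (g1 q))); apply exA with X; auto. }
    assert (P2 : forall k, is_dir k -> dR k (fun q => fst (qadd2 f1 f2 g1 g2 q)) p =
       dR k (fun q => fst (f2 q)) p + dR k (fun q => fst (g2 q)) p).
    { intros k Hk. apply (dR_plus (fun q => fst (f2 q)) (fun q => fst (g2 q))); apply exA with X; auto. }
    destruct (EF p (XV p Hp)) as [F0 [F1 [F2 F3]]]. destruct (EG p (XW p Hp)) as [G0 [G1 [G2 G3]]].
    unfold Eqs. rewrite !P1, !P2 by auto. repeat split; lra.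
- intros V f1 f2 r HF.
  destruct (HR_parts _ _ _ _ HF) as [HV [HVU [HNV [A1 [B1 [A2 [B2 [EF ZF]]]]]]]].
  apply HR_make; auto.
  + intros n; unfold Cmult, RtoC; simpl; smt.
  + intros n; unfold Cmult, RtoC; simpl; smt.
  + intros n; unfold Cmult, RtoC; simpl; smt.
  + intros n; unfold Cmult, RtoC; simpl; smt.
  + intros q Hq. destruct (ZF q Hq). unfold Cmult, RtoC; simpl. rewrite H, H0. split; ring.
  + intros p Hp.
    assert (P : forall (f : pt -> C) k, is_dir k -> SmA V (fun q => fst (f q)) -> SmA V (fun q => snd (f q)) ->
       dR k (fun q => fst (Cmult (f q) (RtoC r))) p = dR k (fun q => fst (f q)) p * r).
    { intros f k Hk Sa Sb. unfold Cmult, RtoC; simpl.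
      rewrite (dR_minus (fun q => fst (f q) * r) (fun q => snd (f q) * 0)).
      rewrite dR_scal, dR_scal0. ring. apply exA with V; auto.
      apply exR_mult; [apply exA with V; auto|apply exR_const].
      apply exR_mult; [apply exA with V; auto|apply exR_const]. }
    destruct (EF p Hp) as [F0 [F1 [F2 F3]]].
    unfold Eqs. rewrite !(P f1), !(P f2) by auto. rewrite F0, F1, F2, F3. repeat split; ring.
- intros V W f1 f2 g1 g2 HF HG.
  destruct (HR_parts _ _ _ _ HF) as [HV [HVU [HNV [A1 [B1 [A2 [B2 [EF ZF]]]]]]]].
  destruct (HR_parts _ _ _ _ HG) as [HW [HWU [HNW [C1 [E1 [C2 [E2 [EG ZG]]]]]]]].
  set (X := fun p => V p /\ W p).
  assert (HX : open X) by (apply open_and; auto).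
  assert (XV : forall p, X p -> V p) by (intros p [? ?]; auto).
  assert (XW : forall p, X p -> W p) by (intros p [? ?]; auto).
  apply (SmA_sub V X) in A1, B1, A2, B2; auto. apply (SmA_sub W X) in C1, E1, C2, E2; auto.
  apply HR_make; auto.
  + apply null_sub with (fun p => (U p /\ ~ V p) \/ (U p /\ ~ W p)).
    * intros p [Hp Hn]. destruct (Classical_Prop.classic (V p)) as [Hv|Hv]; [right|left]; split; auto.
      intro Hw; apply Hn; split; auto.
    * apply null_union; auto.
  + intros n; unfold qmul1, Cminus, Cplus, Copp, Cmult, Cconj; simpl; smt.
  + intros n; unfold qmul1, Cminus, Cplus, Copp, Cmult, Cconj; simpl; smt.
  + intros n; unfold qmul2, Cminus, Cplus, Copp, Cmult, Cconj; simpl; smt.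
  + intros n; unfold qmul2, Cminus, Cplus, Copp, Cmult, Cconj; simpl; smt.
  + intros q Hq. destruct (ZF q (XV q Hq)), (ZG q (XW q Hq)).
    unfold qmul1, qmul2, Cminus, Cplus, Copp, Cmult, Cconj; simpl. rewrite H, H0, H1, H2. split; ring.
  + intros p Hp.
    assert (P1 : forall k, is_dir k -> dR k (fun q => fst (qmul1 f1 f2 g1 g2 q)) p =
       (dR k (fun q => fst (f1 q)) p * fst (g1 p) + fst (f1 p) * dR k (fun q => fst (g1 q)) p)
       - (dR k (fun q => fst (f2 q)) p * fst (g2 p) + fst (f2 p) * dR k (fun q => fst (g2 q)) p)).
    { intros k Hk.
      rewrite (dR_ext X _ (fun q => fst (f1 q) * fst (g1 q) - fst (f2 q) * fst (g2 q))); auto.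
      - apply dR_pm; apply exA with X; auto.
      - intros q Hq. destruct (ZF q (XV q Hq)), (ZG q (XW q Hq)).
        unfold qmul1, Cminus, Cplus, Copp, Cmult, Cconj; simpl. rewrite H, H0, H1, H2. ring. }
    assert (P2 : forall k, is_dir k -> dR k (fun q => fst (qmul2 f1 f2 g1 g2 q)) p =
       (dR k (fun q => fst (f1 q)) p * fst (g2 p) + fst (f1 p) * dR k (fun q => fst (g2 q)) p)
       + (dR k (fun q => fst (f2 q)) p * fst (g1 p) + fst (f2 p) * dR k (fun q => fst (g1 q)) p)).
    { intros k Hk.
      rewrite (dR_ext X _ (fun q => fst (f1 q) * fst (g2 q) + fst (f2 q) * fst (g1 q))); auto.
      - apply dR_pp; apply exA with X; auto.
      - intros q Hq. destruct (ZF q (XV q Hq)), (ZG q (XW q Hq)).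
        unfold qmul2, Cminus, Cplus, Copp, Cmult, Cconj; simpl. rewrite H, H0, H1, H2. ring. }
    destruct (EF p (XV p Hp)) as [F0 [F1 [F2 F3]]]. destruct (EG p (XW p Hp)) as [G0 [G1 [G2 G3]]].
    unfold Eqs. rewrite !P1, !P2 by auto. rewrite F0, F1, F2, F3, G0, G1, G2, G3. repeat split; ring.
Qed.
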